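(* Let $A$ be any (possibly randomized) online algorithm for Machine Covering on $m$ machines that is $c$-competitive in the adversarial model when it knows the input length $n$ beforehand. Then there is an online strategy $B$ that does not know $n$ and is $c$-competitive in the adversarial model. If $A$ is deterministic, $B$ can be chosen deterministic as well.
   Context: Machine Covering: jobs with non-negative sizes are assigned to $m$ identical parallel machines, maximizing the minimum machine load; $\mathrm{OPT}$ denotes the optimal offline minimum load. Computability is ignored. A deterministic online algorithm that does not know $n$ is a function mapping every finite job sequence $J_1,\dots,J_{n'}$ to the machine onto which $J_{n'}$ is scheduled; a deterministic online algorithm that knows $n$ maps tuples $(n,J_1,\dots,J_{n'})$ with $n\ge n'$ to the machine onto which $J_{n'}$ is scheduled, where $n$ is the total input length. A randomized online algorithm is a probability distribution over deterministic ones. An algorithm is $c$-competitive in the adversarial model if for every input sequence (in every order) its expected minimum load is at least $\mathrm{OPT}/c$. *)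

(* Defs.v *)
From HB Require Import structures.
From mathcomp Require Import all_boot all_order all_algebra.
From mathcomp Require Import all_classical all_reals all_analysis.
Unset Printing Implicit Defensive.
Import Order.TTheory GRing.Theory Num.Theory.
Local Open Scope ring_scope.
Local Open Scope classical_set_scope.

Section MachineCovering.
Context {R : realType} {m : nat}.

(* A deterministic online algorithm that does NOT know n: maps the job
   sequence J_1..J_n' (the last entry being the current job) to the machine
   on which J_n' is scheduled. (Its value on [::] is irrelevant.) *)
Definition det_alg := seq R -> 'I_m.

(* A deterministic online algorithm that KNOWS n: maps (n, J_1..J_n') with
   n >= n' to the machine for J_n'. (Values for n < n' are irrelevant.) *)
Definition det_alg_n := nat -> seq R -> 'I_m.

Definition load (sigma : seq R) (g : 'I_(size sigma) -> 'I_m) (j : 'I_m) : R :=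
  \sum_(i < size sigma | g i == j) sigma`_i.

(* minimum machine load (as an extended real; finite when m > 0) *)
Definition minload (sigma : seq R) (g : 'I_(size sigma) -> 'I_m) : \bar R :=
  \big[Order.min/+oo%E]_(j < m) (@load sigma g j)%:E.

Definition OPT (sigma : seq R) : \bar R :=
  \big[Order.max/-oo%E]_(g : {ffun 'I_(size sigma) -> 'I_m}) @minload sigma g.

Definition sched (A : det_alg) (sigma : seq R) : 'I_(size sigma) -> 'I_m :=
  fun i => A (take i.+1 sigma).

Definition sched_n (A : det_alg_n) (sigma : seq R) : 'I_(size sigma) -> 'I_m :=
  fun i => A (size sigma) (take i.+1 sigma).

Definition valid_input (sigma : seq R) : bool := all (fun x => 0 <= x) sigma.

Definition det_competitive (c : R) (A : det_alg) : Prop :=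
  forall sigma, valid_input sigma ->
    (OPT sigma * (c^-1)%:E <= @minload sigma (sched A sigma))%E.

Definition det_competitive_n (c : R) (A : det_alg_n) : Prop :=
  forall sigma, valid_input sigma ->
    (OPT sigma * (c^-1)%:E <= @minload sigma (sched_n A sigma))%E.

(* A randomized algorithm is a probability distribution over deterministic
   ones: a probability space (T, P) together with a family A : T -> det_alg
   which is measurable for the product sigma-algebra on the space of
   deterministic algorithms (i.e. every decision is a measurable function). *)
Definition rand_alg_measurable {d} {T : measurableType d} (A : T -> det_alg) :=
  forall (s : seq R) (j : 'I_m), measurable [set w | A w s = j].

Definition rand_alg_n_measurable {d} {T : measurableType d} (A : T -> det_alg_n) :=
  forall (n : nat) (s : seq R) (j : 'I_m), measurable [set w | A w n s = j].

Definition rand_competitive {d} {T : measurableType d} (P : probability T R)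
    (c : R) (A : T -> det_alg) : Prop :=
  forall sigma, valid_input sigma ->
    (OPT sigma * (c^-1)%:E <= \int[P]_w @minload sigma (sched (A w) sigma))%E.

Definition rand_competitive_n {d} {T : measurableType d} (P : probability T R)
    (c : R) (A : T -> det_alg_n) : Prop :=
  forall sigma, valid_input sigma ->
    (OPT sigma * (c^-1)%:E <= \int[P]_w @minload sigma (sched_n (A w) sigma))%E.

End MachineCovering.

(* Main.v *)
Require Import Defs.
From HB Require Import structures.
From mathcomp Require Import all_boot all_order all_algebra.
From mathcomp Require Import all_classical all_reals all_analysis.
Import Order.TTheory GRing.Theory Num.Theory.
Import numFieldTopology.Exports numFieldNormedType.Exports.
Local Open Scope ring_scope.
Local Open Scope classical_set_scope.

Lemma Uf_ex : exists G : set_system nat, UltraFilter G /\ (\oo : set_system nat) `<=` G.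
Proof. exact: ultraFilterLemma. Qed.

Definition Uf : set_system nat := projT1 (cid Uf_ex).
Lemma Uf_ultra : UltraFilter Uf.
Proof. exact: (projT2 (cid Uf_ex)).1. Qed.
Lemma Uf_oo : (\oo : set_system nat) `<=` Uf.
Proof. exact: (projT2 (cid Uf_ex)).2. Qed.
Global Instance Uf_proper : ProperFilter Uf.
Proof. exact: (@ultra_proper _ _ Uf_ultra). Qed.

Lemma Uf_ge k : Uf [set N | (k <= N)%N].
Proof. apply: Uf_oo; exact: nbhs_infty_ge. Qed.

Lemma filter_bigI_seq (T : Type) (I : eqType) (F : set_system T) (r : seq I) (S : I -> set T) :
  Filter F -> (forall i, i \in r -> F (S i)) -> F (\big[setI/setT]_(i <- r) S i).
Proof.
move=> FF; elim: r => [|a r IH] H; first by rewrite big_nil; exact: filterT.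
rewrite big_cons; apply: filterI; first by apply: H; rewrite inE eqxx.
by apply: IH => i Hi; apply: H; rewrite inE Hi orbT.
Qed.

Lemma in_bigI (T : Type) (I : eqType) (r : seq I) (S : I -> set T) x :
  (\big[setI/setT]_(i <- r) S i) x <-> (forall i, i \in r -> S i x).
Proof.
elim: r => [|a r IH]; first by rewrite big_nil; split => // _ i.
rewrite big_cons; split.
  by move=> [Ha /IH Hr] i; rewrite inE => /orP [/eqP ->|/Hr].
by move=> H; split; [apply: H; rewrite inE eqxx | apply/IH => i Hi; apply: H; rewrite inE Hi orbT].
Qed.

Section Ulim.
Variable R : realType.

Definition Ulim (x : nat -> R) : R := lim (x @ Uf).
Definition Ucvg (x : nat -> R) := cvg (x @ Uf).

Lemma Ucvg_bounded (x : nat -> R) M : (forall N, `|x N| <= M) -> Ucvg x.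
Proof.
move=> xM.
have [p [_ cp]] : `[-M, M] `&` cluster (x @ Uf) !=set0.
  apply: (@segment_compact R (-M) M (x @ Uf) _).
  apply: (@filterS _ Uf _ setT) => [N _ /=|]; last exact: filterT.
  by rewrite in_itv /= -ler_norml; exact: xM.
rewrite /Ucvg; apply/cvg_ex; exists p => V Vp.
have [//|HC] := in_ultra_setVsetC (x @^-1` V) Uf_ultra.
have [y [/= Hy1 Hy2]] := cp (~` V) V HC Vp.
by exfalso; apply: Hy1.
Qed.

Lemma Ulim_cvg x : Ucvg x -> x @ Uf --> Ulim x.
Proof. by []. Qed.

Lemma Ulim_ge (x : nat -> R) b : Ucvg x -> Uf [set N | b <= x N] -> b <= Ulim x.
Proof.
move=> cx Hb; apply: limr_ge => //.
Qed.

Lemma Ulim_cst k : Ulim (fun=> k) = k.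
Proof. exact: lim_cst. Qed.

Lemma Ucvg_cst k : Ucvg (fun=> k).
Proof. rewrite /Ucvg; apply/cvg_ex; exists k; exact: cvg_cst. Qed.

Lemma Ucvg_D x y : Ucvg x -> Ucvg y -> Ucvg (fun N => x N + y N).
Proof. move=> cx cy; exact: (is_cvgD cx cy). Qed.

Lemma Ulim_D x y : Ucvg x -> Ucvg y -> Ulim (fun N => x N + y N) = Ulim x + Ulim y.
Proof. move=> cx cy; exact: (limD cx cy). Qed.

Lemma Ucvg_M k x : Ucvg x -> Ucvg (fun N => k * x N).
Proof. move=> cx; rewrite /Ucvg; apply/cvg_ex; exists (k * Ulim x); apply: cvgMr; exact: cx. Qed.

Lemma Ulim_M k x : Ucvg x -> Ulim (fun N => k * x N) = k * Ulim x.
Proof. move=> cx; apply: cvg_lim => //; apply: cvgMr; exact: cx. Qed.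

Lemma Ucvg_sum (I : Type) (r : seq I) (f : I -> nat -> R) :
  (forall i, Ucvg (f i)) -> Ucvg (fun N => \sum_(i <- r) f i N).
Proof.
move=> cf; elim: r => [|a r IH].
  under eq_fun do rewrite big_nil; exact: Ucvg_cst.
under eq_fun do rewrite big_cons; exact: Ucvg_D.
Qed.

Lemma Ulim_sum (I : Type) (r : seq I) (f : I -> nat -> R) :
  (forall i, Ucvg (f i)) -> Ulim (fun N => \sum_(i <- r) f i N) = \sum_(i <- r) Ulim (f i).
Proof.
move=> cf; elim: r => [|a r IH].
  rewrite big_nil; under eq_fun do rewrite big_nil; exact: Ulim_cst.
rewrite big_cons -IH; under eq_fun do rewrite big_cons.
by rewrite Ulim_D //; apply: Ucvg_sum.
Qed.

End Ulim.
Arguments Ulim {R} x.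
Arguments Ucvg {R} x.

Section Comb.
Variables (R : realType) (m : nat).

Definition ml (s : seq R) (h : nat -> 'I_m) : \bar R :=
  @minload R m s (fun i => h i).

Lemma load_nat (s : seq R) (h : nat -> 'I_m) j :
  @load R m s (fun i => h i) j = \sum_(0 <= i < size s) (if h i == j then s`_i else 0).
Proof. by rewrite /load big_mkcond /= -(big_mkord xpredT (fun i => if h i == j then s`_i else 0)). Qed.

Lemma load_pad (s : seq R) z (h h' : nat -> 'I_m) j :
  (forall i, (i < size s)%N -> h' i = h i) ->
  @load R m (s ++ nseq z (0%R:R)) (fun i => h' i) j = @load R m s (fun i => h i) j.
Proof.
move=> hh; rewrite !load_nat size_cat size_nseq (@big_cat_nat _ _ _ (size s) 0 _ _ _ (leq0n _) (leq_addr _ _)) /=.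
rewrite [X in _ + X]big1_seq ?addr0; last first.
  move=> i /andP [_]; rewrite mem_index_iota => /andP [hi _].
  by rewrite nth_cat ltnNge hi /= nth_nseq !if_same.
apply: eq_big_nat => i /andP [_ hi]; by rewrite nth_cat hi hh.
Qed.

Lemma minload_ext (s : seq R) (g1 g2 : 'I_(size s) -> 'I_m) :
  (forall i, g1 i = g2 i) -> minload s g1 = minload s g2.
Proof.
move=> e; rewrite /minload; apply: eq_bigr => j _; congr (_%:E).
by rewrite /load; apply: eq_bigl => i; rewrite e.
Qed.

Lemma ml_pad (s : seq R) z (h h' : nat -> 'I_m) :
  (forall i, (i < size s)%N -> h' i = h i) ->
  ml (s ++ nseq z (0%R:R)) h' = ml s h.
Proof.
move=> hh; rewrite /ml /minload; apply: eq_bigr => j _.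
by rewrite (@load_pad s z h h' j hh).
Qed.

Hypothesis hm : (0 < m)%N.
Definition j0 : 'I_m := Ordinal hm.

Lemma OPT_pad (s : seq R) z : (@OPT R m s <= @OPT R m (s ++ nseq z (0%R:R)))%E.
Proof.
rewrite {1}/OPT; apply: (big_ind (fun x => x <= @OPT R m (s ++ nseq z (0%R:R)))%E).
- exact: leNye.
- by move=> x y hx hy; rewrite ge_max hx hy.
move=> g _.
pose h (n : nat) : 'I_m := oapp (fun o : 'I_(size s) => g o) j0 (insub n).
pose g' := [ffun i : 'I_(size (s ++ nseq z (0%R:R))) => h i].
have -> : minload s g = ml s h.
  by apply: minload_ext => i; rewrite /h valK.
have -> : ml s h = minload (s ++ nseq z (0%R:R)) g'.
  rewrite -(@ml_pad s z h h) //; apply: minload_ext => i; by rewrite ffunE.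
rewrite /OPT (bigD1 g') //=; by rewrite le_max lexx.
Qed.

Lemma minload_ge0 (s : seq R) (g : 'I_(size s) -> 'I_m) :
  valid_input s -> (0 <= minload s g)%E.
Proof.
move=> vs; rewrite /minload; apply: (big_ind (fun x => 0 <= x)%E) => //.
  by move=> x y hx hy; rewrite le_min hx hy.
move=> j _; rewrite lee_fin /load; apply: sumr_ge0 => i _.
by move/allP: vs; apply; apply: mem_nth.
Qed.

Lemma minload_lt (s : seq R) (g : 'I_(size s) -> 'I_m) :
  (minload s g < +oo)%E.
Proof.
rewrite /minload (bigD1 j0) //= (le_lt_trans _ (ltry (load s g j0)))// ge_min lexx.
by [].

Qed.

Lemma minload_fin (s : seq R) (g : 'I_(size s) -> 'I_m) :
  valid_input s -> minload s g = (fine (minload s g))%:E.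
Proof.
move=> vs; rewrite fineK //; rewrite ge0_fin_numE ?minload_ge0 //; exact: minload_lt.
Qed.

Lemma valid_pad (s : seq R) z : valid_input s -> valid_input (s ++ nseq z (0%R:R)).
Proof. by rewrite /valid_input all_cat => ->; rewrite all_nseq lexx orbT. Qed.

Lemma take_pad (s : seq R) z i : (i < size s)%N -> take i.+1 (s ++ nseq z (0%R:R)) = take i.+1 s.
Proof. by move=> hi; rewrite takel_cat. Qed.

End Comb.

Section Det.
Variables (R : realType) (m : nat) (c : R).
Hypothesis hm : (0 < m)%N.
Hypothesis hc : 0 < c.

Lemma Uf_choice (f : nat -> 'I_m) : exists j, Uf [set N | f N = j].
Proof.
apply: contrapT => H.
have Hc : forall j, Uf (~` [set N | f N = j]).
  move=> j; have [Hj|//] := in_ultra_setVsetC [set N | f N = j] Uf_ultra.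
  by exfalso; apply: H; exists j.
have : Uf (\big[setI/setT]_(j <- enum 'I_m) ~` [set N | f N = j]).
  by apply: filter_bigI_seq => j _; exact: Hc.
case/filter_ex => N /in_bigI /(_ (f N)); rewrite mem_enum => /(_ isT); exact.
Qed.

Definition Bdet (A : @det_alg_n R m) : @det_alg R m :=
  fun s => projT1 (cid (Uf_choice (fun N => A N s))).

Lemma cinv_ge0 : (0 <= (c^-1)%:E)%E.
Proof. by rewrite lee_fin invr_ge0 ltW. Qed.

Lemma det_part (A : @det_alg_n R m) : det_competitive_n c A -> det_competitive c (Bdet A).
Proof.
move=> HA s vs; set k := size s.
have : Uf ([set N | (k <= N)%N] `&` \big[setI/setT]_(i <- iota 0 k)
          [set N | A N (take i.+1 s) = Bdet A (take i.+1 s)]).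
  apply: filterI; first exact: Uf_ge.
  apply: filter_bigI_seq => i _; exact: (projT2 (cid (Uf_choice (fun N => A N (take i.+1 s))))).
case/filter_ex => N [/= hN /in_bigI hI].
set s' := s ++ nseq (N - k) (0%R:R).
have sz : size s' = N by rewrite size_cat size_nseq subnKC.
have := HA s' (@valid_pad R s (N - k)%N vs).
have -> : minload s' (sched_n A s') = @ml R m s (fun i => Bdet A (take i.+1 s)).
  rewrite -(@ml_pad R m s (N - k)%N _ (fun i => A (size s') (take i.+1 s'))) //.
  move=> i hi; rewrite sz take_pad //; apply: hI; by rewrite mem_iota.
move=> H; apply: le_trans H; apply: lee_wpmul2r; first exact: cinv_ge0.
exact: OPT_pad.
Qed.

End Det.

Lemma in_bigU (T : Type) (I : eqType) (r : seq I) (S : I -> set T) x :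
  (\big[setU/set0]_(i <- r) S i) x <-> (exists2 i, i \in r & S i x).
Proof.
elim: r => [|a r IH]; first by rewrite big_nil; split => // -[i].
rewrite big_cons; split.
  case=> [Ha|/IH [i ir Si]]; first by exists a => //; rewrite inE eqxx.
  by exists i => //; rewrite inE ir orbT.
move=> [i]; rewrite inE => /orP [/eqP -> Ha|ir Si]; first by left.
by right; apply/IH; exists i.
Qed.

Lemma measure_bigU_seq d (T : measurableType d) (R : realType) (P : {measure set T -> \bar R})
  (I : eqType) (r : seq I) (F : I -> set T) : uniq r -> (forall i, measurable (F i)) ->
  (forall i j, i != j -> F i `&` F j = set0) ->
  P (\big[setU/set0]_(i <- r) F i) = (\sum_(i <- r) P (F i))%E.
Proof.
move=> ur mF dF; elim: r ur => [|a r IH]; first by rewrite !big_nil measure0.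
rewrite /= => /andP [ar ur]; rewrite !big_cons measureU //.
- by congr (_ + _); exact: IH.
- by apply: bigsetU_measurable.
apply/seteqP; split => // w [Fa /in_bigU [i ir Fi]].
have : a != i by apply: contraNneq ar => ->.
by move/dF => /seteqP [+ _] => /(_ w (conj Fa Fi)).
Qed.


Lemma integral_part (R : realType) d (T : measurableType d) (mu : {measure set T -> \bar R})
  (I : finType) (X : T -> I) (v : I -> R) :
  (forall i, measurable [set t | X t = i]) -> (forall i, 0 <= v i) ->
  (\int[mu]_t (v (X t))%:E = \sum_(i : I) (v i)%:E * mu [set t | X t = i])%E.
Proof.
move=> mX v0.
transitivity (\int[mu]_t (\sum_(i : I) (v i)%:E * (\1_[set t | X t = i] t)%:E))%E.
  apply: eq_integral => t _; rewrite (bigD1 (X t)) //= big1 ?adde0.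
    by rewrite indicE mem_set // mule1.
  move=> i hi; rewrite indicE memNset ?mule0 //= => hx.
  by move: hi; rewrite hx eqxx.
rewrite ge0_integral_sum //.
- apply: eq_bigr => i _; rewrite ge0_integralZl.
  all: try solve [ by rewrite integral_indic // setIT
    | by apply/measurable_realfun.measurable_EFinP; exact: measurable_realfun.measurable_indic
    | by move=> t _; rewrite lee_fin indicE ler0n | by rewrite lee_fin | exact: measurableT ].
- move=> i; apply: emeasurable_funM; first exact: measurable_cst.
  by apply/measurable_realfun.measurable_EFinP; exact: measurable_realfun.measurable_indic.
- by move=> i t _; rewrite mule_ge0 // lee_fin ?indicE ?ler0n.
Qed.

Lemma unif_itv (R : realType) (a b : R) : 0 <= a -> a <= b -> b <= 1 ->
  uniform_prob (@ltr01 R) `[a, b[%classic = (b - a)%:E.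
Proof.
move=> a0 ab b1; rewrite /uniform_prob integral_uniform_pdf.
rewrite (_ : `[a, b[ `&` `[0, 1] = `[a, b[); last first.
  apply/setIidl => x; rewrite /= !in_itv /= => /andP [h1 h2]; apply/andP; split.
    exact: le_trans a0 h1.
  exact: ltW (lt_le_trans h2 b1).
rewrite (eq_integral (cst 1%:E)); last first.
  move=> x; rewrite inE /= in_itv /= => /andP [h1 h2].
  rewrite /uniform_pdf subr0 invr1 ifT //; apply/andP; split.
    exact: le_trans a0 h1.
  exact: ltW (lt_le_trans h2 b1).
rewrite integral_cst; last exact: measurable_itv.
rewrite mul1e; set L := (X in X = _); have -> : L = lebesgue_measure [set` `[a, b[%R] by [].
rewrite lebesgue_measure_itv /= lte_fin.
case: ifPn => // hba.
have -> : b = a by apply/eqP; rewrite eq_le ab andbT leNgt.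
by rewrite subrr.
Qed.

Section Rand1.
Variables (R : realType) (m : nat) (hm : (0 < m)%N).
Variables (d : measure_display) (T : measurableType d) (P : probability T R).
Variable (A : T -> @det_alg_n R m).
Hypothesis mA : rand_alg_n_measurable A.

Local Notation j0 := (@j0 m hm).

Definition ev N (s : seq R) (p : seq 'I_m) : set T :=
  \big[setI/setT]_(i <- iota 0 (size s)) [set w | A w N (take i.+1 s) = nth j0 p i].

Lemma ev_meas N s p : measurable (ev N s p).
Proof. by apply: bigsetI_measurable => i _; exact: mA. Qed.

Lemma in_ev N s p w : ev N s p w <->
  (forall i, (i < size s)%N -> A w N (take i.+1 s) = nth j0 p i).
Proof.
rewrite /ev in_bigI; split => H i; first by move=> hi; apply: H; rewrite mem_iota.
by rewrite mem_iota => /andP [_ hi]; apply: H.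
Qed.

Definition mu N s p : R := fine (P (ev N s p)).

Lemma mu_E N s p : (mu N s p)%:E = P (ev N s p).
Proof.
rewrite /mu fineK // ge0_fin_numE //.
by apply: (le_lt_trans (probability_le1 P (ev_meas N s p))); exact: ltry.
Qed.

Lemma mu_ge0 N s p : 0 <= mu N s p.
Proof. by rewrite -lee_fin mu_E. Qed.

Lemma mu_le1 N s p : mu N s p <= 1.
Proof. by rewrite -lee_fin mu_E; apply: probability_le1; exact: ev_meas. Qed.

Lemma mu_cvg s p : Ucvg (fun N => mu N s p).
Proof.
apply: (@Ucvg_bounded R _ 1) => N; rewrite ger0_norm ?mu_ge0 //; exact: mu_le1.
Qed.

Lemma ev_rcons N s x p j : size p = size s ->
  ev N (rcons s x) (rcons p j) = ev N s p `&` [set w | A w N (rcons s x) = j].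
Proof.
move=> sp; apply/seteqP; split => w.
- move/in_ev => H; split.
    apply/in_ev => i hi.
    have hi' : (i < size (rcons s x))%N by rewrite size_rcons ltnS ltnW.
    have := H i hi'; rewrite -cats1 takel_cat // nth_rcons sp hi; exact.
  have hs : (size s < size (rcons s x))%N by rewrite size_rcons.
  have := H (size s) hs; rewrite take_oversize; last by rewrite size_rcons.
  by rewrite nth_rcons sp ltnn eqxx.
- move=> [/in_ev H1 /= H2]; apply/in_ev => i; rewrite size_rcons ltnS leq_eqVlt.
  case/orP => [/eqP ->|hi].
    by rewrite take_oversize ?size_rcons // nth_rcons sp ltnn eqxx.
  rewrite -cats1 takel_cat // nth_rcons sp hi; exact: H1.
Qed.

Lemma mu_rcons N s x p : size p = size s ->
  mu N s p = \sum_(j < m) mu N (rcons s x) (rcons p j).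
Proof.
move=> sp; apply: EFin_inj; rewrite mu_E -sumEFin.
under eq_bigr do rewrite mu_E ev_rcons //.
rewrite -measure_bigU_seq ?index_enum_uniq //.
- congr (P _); apply/seteqP; split => w.
    move=> Hw; apply/in_bigU; exists (A w N (rcons s x)) => //; by rewrite mem_index_enum.
  by move/in_bigU => [j _ []].
- by move=> j; apply: measurableI; [exact: ev_meas | exact: mA].
- move=> i j ij; apply/seteqP; split => // w [[_ Hi] [_ Hj]].
  by move: ij; rewrite -Hi -Hj /= eqxx.
Qed.

Definition Dl s p : R := Ulim (fun N => mu N s p).

Lemma Dl_ge0 s p : 0 <= Dl s p.
Proof. apply: Ulim_ge; first exact: mu_cvg. apply: filterS filterT => N _; exact: mu_ge0. Qed.

Lemma Dl_rcons s x p : size p = size s ->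
  Dl s p = \sum_(j < m) Dl (rcons s x) (rcons p j).
Proof.
move=> sp; rewrite /Dl.
rewrite (_ : (fun N => mu N s p) = (fun N => \sum_(j < m) mu N (rcons s x) (rcons p j))).
  by rewrite Ulim_sum // => j; exact: mu_cvg.
by apply: funext => N; exact: mu_rcons.
Qed.

Lemma Dl_nil : Dl [::] [::] = 1.
Proof.
rewrite /Dl (_ : (fun N => mu N [::] [::]) = fun=> 1) ?Ulim_cst //.
apply: funext => N; apply: EFin_inj; rewrite mu_E.
rewrite (_ : ev N [::] [::] = setT) ?probability_setT //.
by apply/seteqP; split => // w _; apply/in_ev.
Qed.


Local Notation D := Dl.

Lemma take_rcons_le (X : Type) (s : seq X) x n : (n <= size s)%N -> take n (rcons s x) = take n s.
Proof. by move=> h; rewrite -cats1 takel_cat. Qed.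

Definition aa (s : seq R) (p : seq 'I_m) : R :=
  \sum_(l < size p) \sum_(i < m | (i < nth j0 p l)%N) D (take l.+1 s) (rcons (take l p) i).

Definition inI s p (U : R) : bool := (aa s p <= U) && (U < aa s p + D s p).

Lemma aa_rcons s x p j : size p = size s ->
  aa (rcons s x) (rcons p j) = aa s p + \sum_(i < m | (i < j)%N) D (rcons s x) (rcons p i).
Proof.
move=> sp; rewrite /aa size_rcons big_ord_recr /=; congr (_ + _).
  apply: eq_bigr => l _; have hl : (l < size p)%N := ltn_ord l.
  apply: eq_big => [i|i _]; first by rewrite nth_rcons hl.
  rewrite (@take_rcons_le _ s x l.+1); last by rewrite -sp.
  by rewrite (@take_rcons_le _ p j l) // ltnW.
rewrite nth_rcons ltnn eqxx (@take_rcons_le _ p j (size p)) // take_size take_oversize //.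
by rewrite size_rcons sp.
Qed.

Lemma sum_split (f : 'I_m -> R) (Q : pred 'I_m) j : (forall i, 0 <= f i) -> Q j ->
  (forall i : 'I_m, (i < j)%N -> Q i) ->
  \sum_(i < m | (i < j)%N) f i + f j <= \sum_(i < m | Q i) f i.
Proof.
move=> f0 Qj HQ; rewrite [X in _ <= X](bigID (fun i : 'I_m => (i < j)%N)) /=.
rewrite [X in _ <= X + _](eq_bigl (fun i : 'I_m => (i < j)%N)); last first.
  by move=> i; case: ltnP => hi; rewrite ?andbT ?andbF //; apply: HQ.
rewrite lerD2l [X in _ <= X](bigD1 j) /=; last by rewrite Qj ltnn.
by rewrite lerDl; apply: sumr_ge0 => i _; exact: f0.
Qed.

Lemma nest s x p j U : size p = size s ->
  inI (rcons s x) (rcons p j) U -> inI s p U.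
Proof.
move=> sp /andP [h1 h2]; rewrite aa_rcons // in h1 h2; apply/andP; split.
  apply: le_trans h1; rewrite lerDl; apply: sumr_ge0 => i _; exact: Dl_ge0.
apply: (lt_le_trans h2); rewrite -addrA lerD2l (Dl_rcons s x p sp).
apply: (@sum_split (fun i => D (rcons s x) (rcons p i)) xpredT) => // i; exact: Dl_ge0.
Qed.

Lemma disj s x p j j' U : size p = size s ->
  inI (rcons s x) (rcons p j) U -> inI (rcons s x) (rcons p j') U -> j = j'.
Proof.
move=> sp.
wlog hjj : j j' / (j <= j')%N.
  move=> H h1 h2; case: (leqP j j') => hjj; first exact: H.
  by apply/esym/H => //; exact: ltnW.
move=> /andP [_ h2] /andP [h1 _]; apply/val_inj/eqP; rewrite eqn_leq hjj /=.
rewrite leqNgt; apply/negP => hlt; rewrite !aa_rcons // in h1 h2.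
have hle : aa s p + \sum_(i < m | (i < j)%N) D (rcons s x) (rcons p i) + D (rcons s x) (rcons p j)
   <= aa s p + \sum_(i < m | (i < j')%N) D (rcons s x) (rcons p i).
  rewrite -addrA lerD2l.
  apply: (@sum_split (fun i => D (rcons s x) (rcons p i)) (fun i : 'I_m => (i < j')%N)) => //.
    by move=> i; exact: Dl_ge0.
  by move=> i hi; apply: ltn_trans hlt.
by have := lt_le_trans h2 (le_trans hle h1); rewrite ltxx.
Qed.

Lemma uniq_path s : forall p q U, size p = size s -> size q = size s ->
  inI s p U -> inI s q U -> p = q.
Proof.
elim/last_ind: s => [|s x IH] p q U.
  by move/size0nil => -> /size0nil ->.
case/lastP: p => [|p j]; first by rewrite !size_rcons => /eqP.
case/lastP: q => [|q j']; first by rewrite !size_rcons => _ /eqP.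
rewrite !size_rcons => /eqP; rewrite eqSS => /eqP sp /eqP; rewrite eqSS => /eqP sq hp hq.
have epq : p = q by apply: (IH p q U) => //; [exact: (nest _ _ _ _ _ sp hp) | exact: (nest _ _ _ _ _ sq hq)].
subst q; congr rcons; exact: (disj _ _ _ _ _ _ sp hp hq).
Qed.

Lemma nest_take s : forall p U l, size p = size s -> inI s p U -> (l <= size s)%N ->
  inI (take l s) (take l p) U.
Proof.
elim/last_ind: s => [|s x IH] p U l.
  by move/size0nil => -> h; rewrite leqn0 => /eqP ->.
case/lastP: p => [|p j]; first by rewrite !size_rcons => /eqP.
rewrite !size_rcons => /eqP; rewrite eqSS => /eqP sp h.
rewrite leq_eqVlt => /orP [/eqP ->|hl].
  by rewrite !take_oversize ?size_rcons ?sp.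
rewrite ltnS in hl; rewrite take_rcons_le // take_rcons_le ?sp //.
exact: (IH p U l sp (nest _ _ _ _ _ sp h) hl).
Qed.

Lemma aa_bounds s : forall p, size p = size s -> 0 <= aa s p /\ aa s p + D s p <= 1.
Proof.
elim/last_ind: s => [|s x IH] p.
  by move/size0nil => ->; rewrite /aa big_ord0 Dl_nil add0r.
case/lastP: p => [|p j]; first by rewrite !size_rcons => /eqP.
rewrite !size_rcons => /eqP; rewrite eqSS => /eqP sp.
have [h0 h1] := IH p sp.
have hs : 0 <= \sum_(i < m | (i < j)%N) D (rcons s x) (rcons p i).
  by apply: sumr_ge0 => i _; exact: Dl_ge0.
rewrite aa_rcons //; split; first exact: addr_ge0.
apply: le_trans h1; rewrite -addrA lerD2l (Dl_rcons s x p sp).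
apply: (@sum_split (fun i => D (rcons s x) (rcons p i)) xpredT) => // i; exact: Dl_ge0.
Qed.

Definition pk (U : R) (s : seq R) : option ((size s).-tuple 'I_m) :=
  [pick q : (size s).-tuple 'I_m | inI s q U].

Definition BB (U : R) : @det_alg R m :=
  fun s => if pk U s is Some q then last j0 q else j0.

Lemma pk_spec s (q : (size s).-tuple 'I_m) U : inI s q U -> pk U s = Some q.
Proof.
rewrite /pk; case: pickP => [q' hq'|none] hq; last by have := none q; rewrite hq.
congr Some; apply: val_inj; apply: (uniq_path _ _ _ U); rewrite ?size_tuple //.
Qed.

Lemma BB_spec s p U : size p = size s -> inI s p U -> BB U s = last j0 p.
Proof.
move=> sp h; rewrite /BB.
have hsz : size p == size s by apply/eqP.
by rewrite (@pk_spec s (Tuple hsz)).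
Qed.

Lemma sched_BB (sg : seq R) (q : seq 'I_m) U : size q = size sg -> inI sg q U ->
  forall i : 'I_(size sg), sched (BB U) sg i = nth j0 q i.
Proof.
move=> sq h i; rewrite /sched.
have hi : (i.+1 <= size sg)%N := ltn_ord i.
rewrite (@BB_spec _ (take i.+1 q)); last first.
- by apply: nest_take.
- by rewrite !size_takel ?sq.
by rewrite -nth_last size_takel ?sq // nth_take.
Qed.

Lemma inI_set s p : [set U | inI s p U] = `[aa s p, (aa s p + D s p)[%classic.
Proof. by apply/seteqP; split => U; rewrite /= in_itv. Qed.

Lemma pk_meas s o : measurable [set U | pk U s = o].
Proof.
case: o => [q|].
  rewrite (_ : [set U | pk U s = Some q] = [set U | inI s q U]).
    by rewrite inI_set; exact: measurable_itv.
  apply/seteqP; split => U /=; last exact: pk_spec.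
  by rewrite /pk; case: pickP => // q' hq' [<-].
rewrite (_ : [set U | pk U s = None] =
   ~` \big[setU/set0]_(q <- index_enum ((size s).-tuple 'I_m)) [set U | inI s q U]).
  apply: measurableC; apply: bigsetU_measurable => q _.
  by rewrite inI_set; exact: measurable_itv.
apply/seteqP; split => U /=.
  by rewrite /pk; case: pickP => // none _ /in_bigU [q _ /=]; rewrite none.
move=> H; rewrite /pk; case: pickP => // q hq; exfalso; apply: H.
by apply/in_bigU; exists q => //; rewrite mem_index_enum.
Qed.

Lemma BB_meas : rand_alg_measurable BB.
Proof.
move=> s j.
pose g (o : option ((size s).-tuple 'I_m)) := if o is Some q then last j0 q else j0.
rewrite (_ : [set w | BB w s = j] =
  \big[setU/set0]_(o <- index_enum (option ((size s).-tuple 'I_m)) | g o == j) [set U | pk U s = o]).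
  by apply: bigsetU_measurable => o _; exact: pk_meas.
rewrite -big_filter; apply/seteqP; split => U /=.
  move=> H; apply/in_bigU; exists (pk U s) => //.
  by rewrite mem_filter mem_index_enum andbT; apply/eqP.
case/in_bigU => o; rewrite mem_filter; case/andP => /eqP Hg _ Ho.
by rewrite -Hg /g -Ho.
Qed.


Lemma rand_part (c : R) : 0 < c -> rand_competitive_n P c A ->
  rand_competitive (uniform_prob (@ltr01 R)) c BB.
Proof.
move=> hc HA sg vs; set k := size sg.
pose P' := uniform_prob (@ltr01 R).
pose v (q : k.-tuple 'I_m) : R := fine (@ml R m sg (fun i => nth j0 q i)).
have v0 q : 0 <= v q by apply: fine_ge0; exact: minload_ge0.
have vE (q : k.-tuple 'I_m) : @ml R m sg (fun i => nth j0 q i) = (v q)%:E by rewrite /v /ml -minload_fin.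
pose Z (U : R) : k.-tuple 'I_m := [tuple BB U (take i.+1 sg) | i < k].
have ZE U : minload sg (sched (BB U) sg) = (v (Z U))%:E.
  rewrite -vE /ml; apply: minload_ext => i.
  by rewrite -(tnth_nth j0 (Z U) i) tnth_mktuple.
have mZ q : measurable [set U | Z U = q].
  rewrite (_ : [set U | Z U = q] =
     \big[setI/setT]_(i <- index_enum 'I_k) [set U | BB U (take i.+1 sg) = tnth q i]).
    by apply: bigsetI_measurable => i _; exact: BB_meas.
  apply/seteqP; split => U.
    by move=> /= <-; apply/in_bigI => i _; rewrite /= tnth_mktuple.
  move/in_bigI => H; apply: eq_from_tnth => i; rewrite tnth_mktuple.
  exact: (H i (mem_index_enum i)).
have step1 : (\int[P']_U minload sg (sched (BB U) sg) =
    \sum_(q : k.-tuple 'I_m) (v q)%:E * P' [set U | Z U = q])%E.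
  transitivity (\int[P']_U (v (Z U))%:E)%E; first by apply: eq_integral => U _; rewrite ZE.
  exact: integral_part.
have step2 : ((\sum_(q : k.-tuple 'I_m) v q * Dl sg q)%:E <=
    \int[P']_U minload sg (sched (BB U) sg))%E.
  rewrite step1 -sumEFin; apply: lee_sum => q _; rewrite EFinM; apply: lee_wpmul2l.
    by rewrite lee_fin.
  have [hb0 hb1] := aa_bounds sg q (size_tuple q).
  have -> : (Dl sg q)%:E = P' [set U | inI sg q U].
    rewrite inI_set /P' unif_itv //; last by rewrite lerDl Dl_ge0.
    by rewrite addrC addKr.
  apply: le_measure; first by apply/mem_set; rewrite inI_set; exact: measurable_itv.
    by apply/mem_set; exact: mZ.
  move=> U /= hU; apply: eq_from_tnth => i; rewrite tnth_mktuple (tnth_nth j0).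
  exact: (sched_BB _ _ _ (size_tuple q) hU i).
pose S N := \sum_(q : k.-tuple 'I_m) v q * mu N sg q.
have HS N : (k <= N)%N -> (@OPT R m sg * (c^-1)%:E <= (S N)%:E)%E.
  move=> hN; set s' := sg ++ nseq (N - k) (0%R:R).
  have sz : size s' = N by rewrite size_cat size_nseq subnKC.
  have := HA s' (@valid_pad R sg (N - k)%N vs).
  pose X (w : T) : k.-tuple 'I_m := [tuple A w N (take i.+1 sg) | i < k].
  have -> : (\int[P]_w minload s' (sched_n (A w) s') = (S N)%:E)%E.
    transitivity (\int[P]_w (v (X w))%:E)%E.
      apply: eq_integral => w _; rewrite -vE.
      change (@ml R m s' (fun i => A w (size s') (take i.+1 s')) = @ml R m sg (fun i => nth j0 (X w) i)).
      apply: ml_pad => i hi; rewrite -(tnth_nth j0 (X w) (Ordinal hi)) tnth_mktuple /=.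
      by rewrite sz take_pad.
    rewrite integral_part //; last first.
      move=> q; rewrite (_ : [set w | X w = q] = ev N sg q); first exact: ev_meas.
      apply/seteqP; split => w /=.
        move=> <-; apply/in_ev => i hi.
        by rewrite -(tnth_nth j0 _ (Ordinal hi)) tnth_mktuple.
      move/in_ev => H; apply: eq_from_tnth => i; rewrite tnth_mktuple (tnth_nth j0).
      exact: H.
    rewrite /S -sumEFin; apply: eq_bigr => q _; rewrite EFinM mu_E; congr (_ * _)%E.
    congr (P _); apply/seteqP; split => w /=.
      move=> <-; apply/in_ev => i hi.
      by rewrite -(tnth_nth j0 _ (Ordinal hi)) tnth_mktuple.
    move/in_ev => H; apply: eq_from_tnth => i; rewrite tnth_mktuple (tnth_nth j0).
    exact: H.
  move=> H; apply: le_trans H; apply: lee_wpmul2r; first by rewrite lee_fin invr_ge0 ltW.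
  exact: (@OPT_pad R m hm sg (N - k)%N).
have cS : Ucvg S.
  by apply: Ucvg_sum => q; apply: Ucvg_M; exact: mu_cvg.
have LS : Ulim S = \sum_(q : k.-tuple 'I_m) v q * Dl sg q.
  rewrite /S Ulim_sum; last by move=> q; apply: Ucvg_M; exact: mu_cvg.
  by apply: eq_bigr => q _; rewrite Ulim_M //; exact: mu_cvg.
apply: le_trans step2.
move: (HS k (leqnn k)); case E: (@OPT R m sg * (c^-1)%:E)%E => [r| |] // Hk.
  rewrite -LS lee_fin; apply: Ulim_ge => //; apply: filterS (Uf_ge k) => N hN.
  by have := HS N hN; rewrite E lee_fin.
exact: leNye.
Qed.

End Rand1.

Close Scope classical_set_scope.
Close Scope ring_scope.

Theorem proposition18 (R : realType) (m : nat) (c : R) :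
  (0 < m)%N -> (0 < c)%R ->
  (* randomized case *)
  (forall (d : measure_display) (T : measurableType d) (P : probability T R)
          (A : T -> @det_alg_n R m),
     rand_alg_n_measurable A -> rand_competitive_n P c A ->
     exists (d' : measure_display) (T' : measurableType d')
            (P' : probability T' R) (B : T' -> @det_alg R m),
       rand_alg_measurable B /\ rand_competitive P' c B)
  /\
  (* deterministic case *)
  (forall A : @det_alg_n R m, det_competitive_n c A ->
     exists B : @det_alg R m, det_competitive c B).
Proof.
move=> hm hc; split.
- move=> d T P A mA HA.
  exists _, _, (uniform_prob (@ltr01 R)), (@BB R m hm d T P A).
  split; [exact: BB_meas | exact: rand_part].
- move=> A HA; exists (@Bdet R m A); exact: det_part.
Qed.
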